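(* If $t\in[1,2]$, then $w(t,a)=w_1(t,a)$ and $w(t,a)/W(t,a)\le 2/3$ for all $a\in[(3t+2)/4,2]$.
   Context: For $(t,a)\in\mathbb R^2$ define $w_1(t,a)=(2t+3)a-(3t^2/4+t)$, $w_2(t,a)=(4t+4)a-(3t^2/2+2t+2)$, $w_3(t,a)=8ta-(3t^2+4t-4)$, $W(t,a)=[(t+2)a-(t^2/2+t)](t+2)$, and $w(t,a)=\min\{w_1(t,a),w_2(t,a),w_3(t,a)\}$. *)

(* Defs.v *)
From Stdlib Require Import Reals.
Open Scope R_scope.

Definition w1 (t a : R) : R := (2*t+3)*a - (3*t^2/4 + t).
Definition w2 (t a : R) : R := (4*t+4)*a - (3*t^2/2 + 2*t + 2).
Definition w3 (t a : R) : R := 8*t*a - (3*t^2 + 4*t - 4).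
Definition WW (t a : R) : R := ((t+2)*a - (t^2/2 + t)) * (t+2).
Definition w (t a : R) : R := Rmin (w1 t a) (Rmin (w2 t a) (w3 t a)).

(* Main.v *)
Require Import Defs.
From Stdlib Require Import Reals Lra Psatz.
Open Scope R_scope.

Theorem lemmaA6 (t : R) (ht : 1 <= t <= 2) :
  forall a : R, (3*t+2)/4 <= a <= 2 ->
    w t a = w1 t a /\ w t a / WW t a <= 2/3.
Proof.
  intros a [Ha1 Ha2].
  assert (E12 : w1 t a <= w2 t a).
  { unfold w1, w2. nra. }
  assert (E13 : w1 t a <= w3 t a).
  { unfold w1, w3. nra. }
  assert (Hw : w t a = w1 t a).
  { unfold w. apply Rmin_left. apply Rmin_glb; lra. }
  split; [exact Hw|].
  rewrite Hw.
  assert (HW : 0 < WW t a).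
  { unfold WW. apply Rmult_lt_0_compat; nra. }
  apply (Rmult_le_reg_r (WW t a)); [exact HW|].
  unfold Rdiv at 1. rewrite Rmult_assoc, Rinv_l by lra.
  unfold w1, WW in *. nra.
Qed.
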